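(* Let $L$ be the first-order language with equality whose only non-logical symbol is a binary relation symbol $R$. There is a sentence $\varphi$ of $L$ using only the three variables $x,y,z$ such that $\varphi$ is preserved under substructures, but $\varphi$ is not equivalent to any universal formula of $L$ using only the three variables $x,y,z$.
   Context: A formula ''uses only the variables $x,y,z$'' if every variable occurring in it, free or bound, is one of $x,y,z$; variables may be requantified. A universal formula is one built from atomic formulas ($Ruv$ or $u=v$, with $u,v$ variables) and negations of atomic formulas using only conjunction, disjunction and universal quantification. A sentence is preserved under substructures if, whenever it is true in a structure, it is true in every substructure (i.e., in the induced structure on every nonempty subset of the universe). Two formulas are equivalent if they are true in the same structures under the same assignments. *)

(* Defs.v *)
(* First-order logic over the language {R} (R binary) with
   equality, restricted to formulas whose variables (free or bound) are among
   x, y, z: this restriction is built into the syntax, since [var] has exactly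
   the three constructors vx, vy, vz (requantification is allowed). *)

Inductive var : Type := vx | vy | vz.

Definition var_eqb (u v : var) : bool :=
  match u, v with
  | vx, vx | vy, vy | vz, vz => true
  | _, _ => false
  end.

Inductive form : Type :=
  | FRel : var -> var -> form
  | FEq  : var -> var -> form
  | FNeg : form -> form
  | FAnd : form -> form -> form
  | FOr  : form -> form -> form
  | FEx  : var -> form -> form
  | FAll : var -> form -> form.

Record structure : Type := Struct {
  dom : Type;
  rel : dom -> dom -> Prop;
  pt  : dom   (* witness of nonemptiness *)
}.

Definition update {D : Type} (e : var -> D) (v : var) (d : D) : var -> D :=
  fun w => if var_eqb v w then d else e w.

Fixpoint sat (M : structure) (e : var -> dom M) (f : form) : Prop :=
  match f with
  | FRel u v => rel M (e u) (e v)
  | FEq u v => e u = e v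
  | FNeg g => ~ sat M e g
  | FAnd g h => sat M e g /\ sat M e h
  | FOr g h => sat M e g \/ sat M e h
  | FEx v g => exists d : dom M, sat M (update e v d) g
  | FAll v g => forall d : dom M, sat M (update e v d) g
  end.

Fixpoint free (w : var) (f : form) : Prop :=
  match f with
  | FRel u v | FEq u v => w = u \/ w = v
  | FNeg g => free w g
  | FAnd g h | FOr g h => free w g \/ free w h
  | FEx v g | FAll v g => w <> v /\ free w g
  end.

Definition sentence (f : form) : Prop := forall w, ~ free w f.

Definition true_in (M : structure) (f : form) : Prop :=
  forall e : var -> dom M, sat M e f.

Definition substructure (M : structure) (S : dom M -> Prop) (d0 : dom M)
  (H : S d0) : structure :=
  {| dom := { d : dom M | S d };
     rel := fun a b => rel M (proj1_sig a) (proj1_sig b);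
     pt := exist S d0 H |}.

Definition preserved_under_substructures (f : form) : Prop :=
  forall (M : structure), true_in M f ->
  forall (S : dom M -> Prop) (d0 : dom M) (H : S d0),
    true_in (substructure M S d0 H) f.

Inductive universal : form -> Prop :=
  | u_rel : forall u v, universal (FRel u v)
  | u_eq : forall u v, universal (FEq u v)
  | u_nrel : forall u v, universal (FNeg (FRel u v))
  | u_neq : forall u v, universal (FNeg (FEq u v))
  | u_and : forall f g, universal f -> universal g -> universal (FAnd f g)
  | u_or : forall f g, universal f -> universal g -> universal (FOr f g)
  | u_all : forall v f, universal f -> universal (FAll v f).

Definition equivalent (f g : form) : Prop :=
  forall (M : structure) (e : var -> dom M), sat M e f <-> sat M e g.

(* Main.v *)
Require Import Defs.
From Stdlib Require Import List Bool Classical ProofIrrelevance.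
Import ListNotations.

Definition Rf u v := FRel u v.
Definition Nf u v := FNeg (FEq u v).
Definition hyp (x y z : var) : form :=
  FAnd (FRel x z) (FAnd (FRel y z) (FAnd (FRel x x) (FAnd (FRel y y)
    (FAnd (Nf x y) (FAnd (Nf x z) (Nf y z)))))).
Definition Phi1 : form :=
  FAll vz (FAll vx (FAll vy (FOr (FNeg (hyp vx vy vz))
     (FAnd (FNeg (FRel vx vy)) (FNeg (FRel vy vx)))))).
Definition nonadj u v := FAnd (FNeg (FRel u v)) (FNeg (FRel v u)).
Definition Phi2 : form :=
  FNeg (FEx vx (FEx vy (FEx vz
    (FAnd (FRel vx vx) (FAnd (FRel vy vy) (FAnd (FRel vz vz)
    (FAnd (Nf vx vy) (FAnd (Nf vy vz) (FAnd (Nf vx vz)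
    (FAnd (nonadj vx vy) (FAnd (nonadj vy vz) (nonadj vx vz)))))))))))).
Definition Phi3 : form :=
  FAll vz (FAll vx (FAll vy (FOr (FNeg (hyp vx vy vz))
     (FAll vx (FOr (FNeg (FRel vz vx))
        (FEx vy (FAnd (FRel vy vz) (FAnd (FRel vy vy) (FRel vy vx))))))))).
Definition phi0 : form := FAnd Phi1 (FAnd Phi2 Phi3).

Fixpoint freeb (w : var) (f : form) : bool :=
  match f with
  | FRel u v | FEq u v => var_eqb w u || var_eqb w v
  | FNeg g => freeb w g
  | FAnd g h | FOr g h => freeb w g || freeb w h
  | FEx v g | FAll v g => negb (var_eqb w v) && freeb w g
  end.

Lemma var_eqb_refl : forall v, var_eqb v v = true.
Proof. destruct v; reflexivity. Qed.

Lemma free_freeb : forall w f, free w f -> freeb w f = true.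
Proof.
  intros w f; induction f; simpl; intros H;
  try (destruct H as [H|H]; subst; rewrite ?var_eqb_refl, ?orb_true_r; auto;
       rewrite ?IHf1, ?IHf2, ?orb_true_r; auto; fail).
  - auto.
  - destruct H as [H|H]; [rewrite IHf1 | rewrite IHf2, orb_true_r]; auto.
  - destruct H as [H|H]; [rewrite IHf1 | rewrite IHf2, orb_true_r]; auto.
  - destruct H as [H1 H2]; rewrite IHf by auto; destruct w, v; try reflexivity;
    congruence.
  - destruct H as [H1 H2]; rewrite IHf by auto; destruct w, v; try reflexivity;
    congruence.
Qed.

Lemma phi0_sentence : sentence phi0.
Proof.
  intros w H; apply free_freeb in H; destruct w; vm_compute in H; discriminate.
Qed.

Section Eval.
Variable D : Type.
Variable eqb : D -> D -> bool.
Hypothesis eqb_spec : forall a b, eqb a b = true <-> a = b.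
Variable relb : D -> D -> bool.
Variable enum : list D.
Hypothesis enum_full : forall d, In d enum.
Variable d0 : D.

Definition FS : structure := Struct D (fun a b => relb a b = true) d0.

Fixpoint evalf (e : var -> D) (f : form) : bool :=
  match f with
  | FRel u v => relb (e u) (e v)
  | FEq u v => eqb (e u) (e v)
  | FNeg g => negb (evalf e g)
  | FAnd g h => evalf e g && evalf e h
  | FOr g h => evalf e g || evalf e h
  | FEx v g => existsb (fun d => evalf (update e v d) g) enum
  | FAll v g => forallb (fun d => evalf (update e v d) g) enum
  end.

Lemma evalf_sat : forall f (e : var -> D), sat FS e f <-> evalf e f = true.
Proof.
  induction f; intros e; simpl.
  - tauto.
  - symmetry; apply eqb_spec.
  - rewrite IHf. destruct (evalf e f); simpl; intuition congruence.
  - rewrite IHf1, IHf2, andb_true_iff; tauto.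
  - rewrite IHf1, IHf2, orb_true_iff; tauto.
  - rewrite existsb_exists. split.
    + intros [d Hd]; exists d; split; [apply enum_full | apply IHf; exact Hd].
    + intros [d [_ Hd]]; exists d; apply IHf; exact Hd.
  - rewrite forallb_forall. split.
    + intros H d _; apply IHf; apply H.
    + intros H d; apply IHf; apply H, enum_full.
Qed.
End Eval.

Inductive EA := A0 | A1 | A2 | A3.
Scheme Equality for EA.
Definition nA (a : EA) : nat := match a with A0 => 0 | A1 => 1 | A2 => 2 | A3 => 3 end.
Definition pairin (l : list (nat * nat)) (i j : nat) : bool :=
  existsb (fun p => Nat.eqb (fst p) i && Nat.eqb (snd p) j) l.
Definition relAl := [(0,0);(1,1);(0,2);(1,2);(2,3)].
Definition relAb (a b : EA) : bool := pairin relAl (nA a) (nA b).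
Definition enumA := [A0; A1; A2; A3].
Lemma enumA_full : forall d, In d enumA. Proof. destruct d; simpl; tauto. Qed.
Lemma eqA_spec : forall a b, EA_beq a b = true <-> a = b.
Proof. intros a b; split; [apply internal_EA_dec_bl | apply internal_EA_dec_lb]. Qed.
Definition MA := FS EA relAb A0.

Inductive EB := B0 | B1 | B2 | B3 | B4 | B5 | B6 | B7 | B8 | B9 | B10 | B11.
Scheme Equality for EB.
Definition nB (b : EB) : nat := match b with B0 => 0 | B1 => 1 | B2 => 2 | B3 => 3
  | B4 => 4 | B5 => 5 | B6 => 6 | B7 => 7 | B8 => 8 | B9 => 9 | B10 => 10 | B11 => 11 end.
Definition relBl := [(0, 0); (0, 2); (0, 4); (0, 7); (0, 8); (0, 11); (1, 1); (1, 3); (1, 4); (1, 5); (1, 8); (1, 9); (2, 2); (2, 5); (2, 6); (2, 9); (2, 10); (3, 3); (3, 6); (3, 7); (3, 10); (3, 11); (4, 9); (4, 11); (5, 8); (5, 10); (6, 9); (6, 11); (7, 8); (7, 10)].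
Definition relBb (a b : EB) : bool := pairin relBl (nB a) (nB b).
Definition enumB := [B0; B1; B2; B3; B4; B5; B6; B7; B8; B9; B10; B11].
Lemma enumB_full : forall d, In d enumB. Proof. destruct d; simpl; tauto. Qed.
Lemma eqB_spec : forall a b, EB_beq a b = true <-> a = b.
Proof. intros a b; split; [apply internal_EB_dec_bl | apply internal_EB_dec_lb]. Qed.
Definition MB := FS EB relBb B0.

Lemma A_not_phi : forall e, ~ sat MA e phi0.
Proof.
  intros e H. apply (evalf_sat EA EA_beq eqA_spec relAb enumA enumA_full A0) in H.
  revert H. vm_compute. discriminate.
Qed.

Lemma B_phi : forall e, sat MB e phi0.
Proof.
  intros e. apply (evalf_sat EB EB_beq eqB_spec relBb enumB enumB_full B0).
  vm_compute. reflexivity.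
Qed.

(* ---------- existential 3-pebble game from A to B ---------- *)
Definition typok (a : EA) (b : EB) : bool :=
  match a with
  | A2 => Nat.leb 4 (nB b) && Nat.leb (nB b) 7
  | A3 => Nat.leb 8 (nB b)
  | _ => true
  end.
Definition ok1 (a : EA) (b : EB) : bool := Bool.eqb (relAb a a) (relBb b b) && typok a b.
Definition ok2 (a : EA) (b : EB) (a' : EA) (b' : EB) : bool :=
  Bool.eqb (relAb a a') (relBb b b') && Bool.eqb (relAb a' a) (relBb b' b)
  && Bool.eqb (EA_beq a a') (EB_beq b b').
Definition goodb a1 b1 a2 b2 a3 b3 : bool :=
  ok1 a1 b1 && ok1 a2 b2 && ok1 a3 b3 && ok2 a1 b1 a2 b2 && ok2 a1 b1 a3 b3 && ok2 a2 b2 a3 b3.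
Definition pairb a2 b2 a3 b3 := ok1 a2 b2 && ok1 a3 b3 && ok2 a2 b2 a3 b3.

Definition ext1b : bool := forallb (fun a2 => forallb (fun b2 => forallb (fun a3 =>
  forallb (fun b3 => forallb (fun d => negb (pairb a2 b2 a3 b3) ||
    existsb (fun b => goodb d b a2 b2 a3 b3) enumB) enumA) enumB) enumA) enumB) enumA.
Lemma ext1b_true : ext1b = true. Proof. vm_compute. reflexivity. Qed.

Lemma ext1 : forall a2 b2 a3 b3 d, pairb a2 b2 a3 b3 = true ->
  exists b, goodb d b a2 b2 a3 b3 = true.
Proof.
  intros a2 b2 a3 b3 d H. pose proof ext1b_true as E. unfold ext1b in E.
  rewrite forallb_forall in E; specialize (E a2 (enumA_full _)).
  rewrite forallb_forall in E; specialize (E b2 (enumB_full _)).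
  rewrite forallb_forall in E; specialize (E a3 (enumA_full _)).
  rewrite forallb_forall in E; specialize (E b3 (enumB_full _)).
  rewrite forallb_forall in E; specialize (E d (enumA_full _)).
  rewrite H in E; cbn [negb orb] in E. apply existsb_exists in E.
  destruct E as [b [_ Hb]]; exists b; exact Hb.
Qed.

Lemma beq_sym_A : forall a a', EA_beq a a' = EA_beq a' a.
Proof. destruct a, a'; reflexivity. Qed.
Lemma beq_sym_B : forall a a', EB_beq a a' = EB_beq a' a.
Proof. destruct a, a'; reflexivity. Qed.

Lemma ok2_sym : forall a b a' b', ok2 a b a' b' = ok2 a' b' a b.
Proof.
  intros. unfold ok2. rewrite beq_sym_A, (beq_sym_B b).
  destruct (Bool.eqb (relAb a a') (relBb b b')), (Bool.eqb (relAb a' a) (relBb b' b));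
  reflexivity.
Qed.

Definition good (eA : var -> EA) (eB : var -> EB) : Prop :=
  goodb (eA vx) (eB vx) (eA vy) (eB vy) (eA vz) (eB vz) = true.

Lemma goodb_p12 : forall a1 b1 a2 b2 a3 b3,
  goodb a1 b1 a2 b2 a3 b3 = goodb a2 b2 a1 b1 a3 b3.
Proof.
  intros. unfold goodb. rewrite (ok2_sym a1 b1 a2 b2).
  destruct (ok1 a1 b1), (ok1 a2 b2), (ok1 a3 b3), (ok2 a2 b2 a1 b1),
    (ok2 a1 b1 a3 b3), (ok2 a2 b2 a3 b3); reflexivity.
Qed.
Lemma goodb_p23 : forall a1 b1 a2 b2 a3 b3,
  goodb a1 b1 a2 b2 a3 b3 = goodb a1 b1 a3 b3 a2 b2.
Proof.
  intros. unfold goodb. rewrite (ok2_sym a2 b2 a3 b3).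
  destruct (ok1 a1 b1), (ok1 a2 b2), (ok1 a3 b3), (ok2 a1 b1 a2 b2),
    (ok2 a1 b1 a3 b3), (ok2 a3 b3 a2 b2); reflexivity.
Qed.
Lemma goodb_pair23 : forall a1 b1 a2 b2 a3 b3,
  goodb a1 b1 a2 b2 a3 b3 = true -> pairb a2 b2 a3 b3 = true.
Proof.
  intros a1 b1 a2 b2 a3 b3. unfold goodb, pairb.
  destruct (ok1 a1 b1), (ok1 a2 b2), (ok1 a3 b3), (ok2 a1 b1 a2 b2),
    (ok2 a1 b1 a3 b3), (ok2 a2 b2 a3 b3); simpl; congruence.
Qed.

Lemma good_ext : forall eA eB, good eA eB -> forall v d, exists b,
  good (update eA v d) (update eB v b).
Proof.
  intros eA eB H v d. unfold good in *.
  destruct v.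
  - destruct (ext1 (eA vy) (eB vy) (eA vz) (eB vz) d) as [b Hb].
    + eapply goodb_pair23; exact H.
    + exists b; simpl; exact Hb.
  - rewrite goodb_p12 in H.
    destruct (ext1 (eA vx) (eB vx) (eA vz) (eB vz) d) as [b Hb].
    + eapply goodb_pair23; exact H.
    + exists b; simpl. rewrite goodb_p12. exact Hb.
  - rewrite goodb_p23, goodb_p12 in H.
    destruct (ext1 (eA vx) (eB vx) (eA vy) (eB vy) d) as [b Hb].
    + eapply goodb_pair23; exact H.
    + exists b; simpl. rewrite goodb_p23, goodb_p12. exact Hb.
Qed.

Lemma pair_atoms : forall a b a' b',
  (ok2 a b a' b' = true \/ (a = a' /\ b = b' /\ ok1 a b = true)) ->
  relAb a a' = relBb b b' /\ EA_beq a a' = EB_beq b b'.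
Proof.
  intros a b a' b' [H | [-> [-> H]]].
  - unfold ok2 in H. apply andb_prop in H as [H H3]. apply andb_prop in H as [H1 H2].
    apply Bool.eqb_prop in H1, H3. auto.
  - unfold ok1 in H. apply andb_prop in H as [H1 _]. apply Bool.eqb_prop in H1.
    split; auto. rewrite (internal_EA_dec_lb a' a' eq_refl), (internal_EB_dec_lb b' b' eq_refl).
    reflexivity.
Qed.

Lemma good_atoms : forall eA eB, good eA eB -> forall u w,
  relAb (eA u) (eA w) = relBb (eB u) (eB w) /\ EA_beq (eA u) (eA w) = EB_beq (eB u) (eB w).
Proof.
  intros eA eB H u w. apply pair_atoms. unfold good, goodb in H.
  destruct (ok1 (eA vx) (eB vx)) eqn:E1, (ok1 (eA vy) (eB vy)) eqn:E2,
    (ok1 (eA vz) (eB vz)) eqn:E3, (ok2 (eA vx) (eB vx) (eA vy) (eB vy)) eqn:E4,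
    (ok2 (eA vx) (eB vx) (eA vz) (eB vz)) eqn:E5,
    (ok2 (eA vy) (eB vy) (eA vz) (eB vz)) eqn:E6; simpl in H; try discriminate;
  destruct u, w; auto; left; rewrite ok2_sym; auto.
Qed.

Lemma univ_transfer : forall psi, universal psi -> forall eA eB, good eA eB ->
  sat MB eB psi -> sat MA eA psi.
Proof.
  intros psi Hu. induction Hu; intros eA eB Hg HB; simpl in *.
  - destruct (good_atoms eA eB Hg u v) as [E _]. rewrite E; exact HB.
  - destruct (good_atoms eA eB Hg u v) as [_ E].
    apply eqA_spec. rewrite E. apply eqB_spec. exact HB.
  - destruct (good_atoms eA eB Hg u v) as [E _]. rewrite E; exact HB.
  - destruct (good_atoms eA eB Hg u v) as [_ E]. intros H. apply HB.
    apply eqB_spec. rewrite <- E. apply eqA_spec. exact H.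
  - destruct HB; split; eauto.
  - destruct HB; [left|right]; eauto.
  - intros d. destruct (good_ext eA eB Hg v d) as [b Hb]. eauto.
Qed.

Lemma good_init : good (fun _ => A0) (fun _ => B0).
Proof. vm_compute. reflexivity. Qed.

Lemma not_universal : ~ (exists psi : form, universal psi /\ equivalent phi0 psi).
Proof.
  intros [psi [Hu Heq]].
  apply (A_not_phi (fun _ => A0)). apply Heq.
  apply (univ_transfer psi Hu _ (fun _ => B0) good_init).
  apply Heq. apply B_phi.
Qed.

Section Sem.
Variable M : structure.
Let R := rel M.
Definition P1 := forall z x y : dom M, R x z -> R y z -> R x x -> R y y ->
  x <> y -> x <> z -> y <> z -> ~ R x y /\ ~ R y x.
Definition P2 := forall x y z : dom M, R x x -> R y y -> R z z ->
  x <> y -> y <> z -> x <> z ->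
  ~ ((~ R x y /\ ~ R y x) /\ (~ R y z /\ ~ R z y) /\ (~ R x z /\ ~ R z x)).
Definition P3 := forall z x y : dom M, R x z -> R y z -> R x x -> R y y ->
  x <> y -> x <> z -> y <> z -> forall x1, R z x1 ->
  exists w, R w z /\ R w w /\ R w x1.

Lemma sat_phi0_P : forall e, sat M e phi0 -> P1 /\ P2 /\ P3.
Proof.
  intros e [H1 [H2 H3]]. simpl in H1, H2, H3. split; [|split].
  - intros z x y h1 h2 h3 h4 h5 h6 h7. destruct (H1 z x y) as [H|H].
    + exfalso; apply H; tauto.
    + exact H.
  - intros x y z h1 h2 h3 h4 h5 h6 h8. apply H2. exists x, y, z. tauto.
  - intros z x y h1 h2 h3 h4 h5 h6 h7 x1 h8. destruct (H3 z x y) as [H|H].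
    + exfalso; apply H; tauto.
    + destruct (H x1) as [H'|H']; [contradiction|]. exact H'.
Qed.

Lemma P_sat_phi0 : forall e, P1 -> P2 -> P3 -> sat M e phi0.
Proof.
  intros e p1 p2 p3. simpl. split; [|split].
  - intros z x y. destruct (classic (R x z /\ R y z /\ R x x /\ R y y /\ x <> y /\ x <> z /\ y <> z))
      as [h|h]; [right|left; exact h].
    destruct h as (h1&h2&h3&h4&h5&h6&h7); exact (p1 z x y h1 h2 h3 h4 h5 h6 h7).
  - intros [x [y [z h]]]. destruct h as (h1&h2&h3&h4&h5&h6&h7).
    exact (p2 x y z h1 h2 h3 h4 h5 h6 h7).
  - intros z x y. destruct (classic (R x z /\ R y z /\ R x x /\ R y y /\ x <> y /\ x <> z /\ y <> z))
      as [h|h]; [right|left; exact h].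
    destruct h as (h1&h2&h3&h4&h5&h6&h7). intros x1.
    destruct (classic (R z x1)) as [h8|h8]; [right|left; exact h8].
    exact (p3 z x y h1 h2 h3 h4 h5 h6 h7 x1 h8).
Qed.
End Sem.

Lemma sig_neq : forall (T : Type) (S : T -> Prop) (a b : {d | S d}),
  a <> b -> proj1_sig a <> proj1_sig b.
Proof.
  intros T S [a Ha] [b Hb] H E; simpl in E; subst. apply H. f_equal. apply proof_irrelevance.
Qed.

Lemma phi0_preserved : preserved_under_substructures phi0.
Proof.
  intros M HM S d0 HS e.
  destruct (sat_phi0_P M (fun _ => pt M) (HM _)) as [p1 [p2 p3]].
  set (N := substructure M S d0 HS).
  apply P_sat_phi0.
  - intros z x y h1 h2 h3 h4 h5 h6 h7.
    exact (p1 _ _ _ h1 h2 h3 h4 (sig_neq _ _ _ _ h5) (sig_neq _ _ _ _ h6) (sig_neq _ _ _ _ h7)).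
  - intros x y z h1 h2 h3 h4 h5 h6.
    exact (p2 _ _ _ h1 h2 h3 (sig_neq _ _ _ _ h4) (sig_neq _ _ _ _ h5) (sig_neq _ _ _ _ h6)).
  - intros z x y h1 h2 h3 h4 h5 h6 h7 x1 h8.
    destruct (p3 _ _ _ h1 h2 h3 h4 (sig_neq _ _ _ _ h5) (sig_neq _ _ _ _ h6)
                 (sig_neq _ _ _ _ h7) _ h8) as [w [w1 [w2 w3]]].
    destruct (classic (w = proj1_sig z)) as [Ez|Ez].
    { exists z. subst w. simpl. auto. }
    destruct (classic (w = proj1_sig x)) as [Ex|Ex].
    { exists x. subst w. simpl. auto. }
    destruct (classic (w = proj1_sig y)) as [Ey|Ey].
    { exists y. subst w. simpl. auto. }
    exfalso.
    pose proof (sig_neq _ _ _ _ h5) as n5. pose proof (sig_neq _ _ _ _ h6) as n6.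
    pose proof (sig_neq _ _ _ _ h7) as n7.
    destruct (p1 _ _ _ h1 h2 h3 h4 n5 n6 n7) as [q1 q2].
    assert (Hxw : w <> proj1_sig x) by exact Ex.
    destruct (p1 (proj1_sig z) (proj1_sig x) w h1 w1 h3 w2 (fun E => Ex (eq_sym E)) n6 Ez) as [q3 q4].
    destruct (p1 (proj1_sig z) (proj1_sig y) w h2 w1 h4 w2 (fun E => Ey (eq_sym E)) n7 Ez) as [q5 q6].
    apply (p2 (proj1_sig x) (proj1_sig y) w h3 h4 w2 n5 (fun E => Ey (eq_sym E))
             (fun E => Ex (eq_sym E))).
    tauto.
Qed.

Theorem mainTheorem1 :
  exists phi : form,
    sentence phi /\ preserved_under_substructures phi /\
    ~ (exists psi : form, universal psi /\ equivalent phi psi).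
Proof.
  exists phi0. split; [exact phi0_sentence | split; [exact phi0_preserved | exact not_universal]].
Qed.
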